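(* For every target rate $r>0$, relay power $P_{\rm r}>0$ and $\mathcal C_x\in[0,1)$, the outage probability of the S–R link is \[ \mathcal P_{\rm sr}(P_{\rm r},\mathcal C_x)=1-\frac{1}{\Gamma(m_{\rm rr})\Gamma(m_{\rm sr})\theta_{\rm rr}^{m_{\rm rr}}}\int_0^\infty x^{m_{\rm rr}-1}\,\Gamma\!\left(m_{\rm sr},\frac{P_{\rm r}x+1}{P_{\rm s}\theta_{\rm sr}}\Psi_r\!\left(\frac{P_{\rm r}x\,\mathcal C_x}{P_{\rm r}x+1}\right)\right)e^{-x/\theta_{\rm rr}}\,dx . \]
   Context: Let $P_{\rm s}>0$, $P_{\rm r}>0$ be the source and relay transmit powers. For links $ij\in\{\mathrm{sr},\mathrm{rr},\mathrm{rd},\mathrm{sd}\}$ let $g_{ij}$ be mutually independent random channel gains, $g_{ij}$ gamma distributed with integer shape parameter $m_{ij}\ge1$ and scale $\theta_{ij}=\pi_{ij}/m_{ij}$, where $\pi_{ij}=\mathbb E[g_{ij}]>0$; i.e. $g_{ij}$ has density $x^{m_{ij}-1}e^{-x/\theta_{ij}}/(\Gamma(m_{ij})\theta_{ij}^{m_{ij}})$ for $x\ge0$. For a circularity coefficient $\mathcal C_x\in[0,1)$ define $R_{\rm sr}(P_{\rm r},\mathcal C_x)=\tfrac12\log_2\frac{(P_{\rm s}g_{\rm sr}+P_{\rm r}g_{\rm rr}+1)^2-(P_{\rm r}g_{\rm rr}\mathcal C_x)^2}{(P_{\rm r}g_{\rm rr}+1)^2-(P_{\rm r}g_{\rm rr}\mathcal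 C_x)^2}$ and $R_{\rm rd}(P_{\rm r},\mathcal C_x)=\tfrac12\log_2\frac{(P_{\rm r}g_{\rm rd}+P_{\rm s}g_{\rm sd}+1)^2-(P_{\rm r}g_{\rm rd}\mathcal C_x)^2}{(P_{\rm s}g_{\rm sd}+1)^2}$. For a target rate $r>0$ put $\gamma=2^{2r}-1$, $\eta=2^r-1$ and $\Psi_r(x)=\sqrt{1+\gamma(1-x^2)}-1$. The outage probabilities are $\mathcal P_{\rm sr}=\mathbb P\{R_{\rm sr}<r\}$, $\mathcal P_{\rm rd}=\mathbb P\{R_{\rm rd}<r\}$ and $\mathcal P_{\rm E-E}=\mathbb P\{\min(R_{\rm sr},R_{\rm rd})<r\}$. $\Gamma(a,x)=\int_x^\infty t^{a-1}e^{-t}dt$ is the upper incomplete gamma function. *)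

(* Defs.v *)
From Stdlib Require Import Reals Lra ClassicalEpsilon.
Open Scope R_scope.

Definition improper_int_to (f : R -> R) (a l : R) : Prop :=
  (forall b, a <= b -> inhabited (Riemann_integrable f a b)) /\
  (forall eps, 0 < eps -> exists M, forall b (pr : Riemann_integrable f a b),
      M <= b -> Rabs (RiemannInt pr - l) < eps).

(* The value of \int_a^oo f (chosen by classical choice; meaningful when it
   converges). *)
Definition Iint (f : R -> R) (a : R) : R :=
  epsilon (inhabits 0) (fun l => improper_int_to f a l).

Definition inc_gamma (s : nat) (x : R) : R :=
  Iint (fun t => t ^ (s - 1) * exp (- t)) x.

Definition Gamma (s : nat) : R := inc_gamma s 0.

Definition gamma_pdf (m : nat) (theta x : R) : R :=
  if Rle_dec 0 x then x ^ (m - 1) * exp (- x / theta) / (Gamma m * theta ^ m)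
  else 0.

Definition log2 (z : R) : R := ln z / ln 2.

Definition R_sr (Ps Pr Cx gsr grr : R) : R :=
  / 2 * log2 (((Ps * gsr + Pr * grr + 1) ^ 2 - (Pr * grr * Cx) ^ 2) /
              ((Pr * grr + 1) ^ 2 - (Pr * grr * Cx) ^ 2)).


(* P_sr = P{ R_sr < r } for independent g_sr ~ Gamma(msr, thsr),
   g_rr ~ Gamma(mrr, thrr): integral of the (product) joint density over
   the event, written as an iterated integral over [0,oo)^2. *)
Definition P_sr (Ps Pr Cx r : R) (msr mrr : nat) (thsr thrr : R) : R :=
  Iint (fun x => gamma_pdf mrr thrr x *
         Iint (fun y => gamma_pdf msr thsr y *
                 (if Rlt_dec (R_sr Ps Pr Cx y x) r then 1 else 0)) 0) 0.

Definition gamma_r (r : R) : R := Rpower 2 (2 * r) - 1.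
Definition eta_r (r : R) : R := Rpower 2 r - 1.
Definition Psi (r x : R) : R := sqrt (1 + gamma_r r * (1 - x ^ 2)) - 1.

(* Main.v *)
Require Import Defs.
From Stdlib Require Import Reals Lra Lia Factorial ClassicalEpsilon Classical.
From Coquelicot Require Import Coquelicot.
Open Scope R_scope.

Fixpoint Sp (n:nat) (t:R) : R := match n with 0%nat => 0 | S k => Sp k t + t^k / INR (fact k) end.
Definition Q n u := exp (-u) * Sp n u.

Lemma INR_fact_pos k : 0 < INR (fact k).
Proof. apply lt_0_INR, lt_O_fact. Qed.

Lemma Sp_sum n t : Sp (S n) t = sum_f_R0 (fun k => t^k / INR (fact k)) n.
Proof. induction n; simpl Sp in *; simpl sum_f_R0. simpl; lra. rewrite <- IHn. simpl. lra. Qed.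

Lemma Sp_derive n t : is_derive (Sp (S n)) t (Sp n t).
Proof.
revert t; induction n; intro t.
- simpl. apply (is_derive_ext (fun _ => 1)). intros; simpl; field. auto_derive; auto.
- assert (H2 : is_derive (fun t => t^(S n) / INR (fact (S n))) t (t^n / INR (fact n))).
  { pose proof (INR_fact_pos n). pose proof (pos_INR n).
    apply (is_derive_ext (fun t => t^(S n) / ((INR n + 1) * INR (fact n)))).
    { intros; rewrite fact_simpl, mult_INR, S_INR; reflexivity. }
    auto_derive. auto. change (match n with 0%nat => 1 | S _ => INR n + 1 end) with (INR (S n)). rewrite S_INR. field. lra. }
  pose proof (is_derive_plus _ _ _ _ _ (IHn t) H2) as H.
  exact H.
Qed.

Lemma Q_derive k u : is_derive (Q (S k)) u (- (exp (-u) * (u^k / INR (fact k)))).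
Proof.
pose proof (Sp_derive k u) as H. unfold Q.
apply (is_derive_ext (fun u => exp (-u) * Sp (S k) u)). reflexivity.
auto_derive. exists (Sp k u); exact H.
change (Derive (fun x : R => Sp k x + x ^ k / INR (fact k)) u) with (Derive (Sp (S k)) u). rewrite (is_derive_unique _ _ _ H). ring.
Qed.

Lemma Sp_nonneg k u : 0 <= u -> 0 <= Sp (S k) u.
Proof. intro. rewrite Sp_sum. apply cond_pos_sum. intro n. apply Rdiv_le_0_compat. apply pow_le; auto. apply INR_fact_pos. Qed.

Lemma Q_ex_derive k t : ex_derive (Q (S k)) t.
Proof. eexists; apply Q_derive. Qed.

Lemma Derive_Q k t : Derive (fun x => Q (S k) x) t = - (exp (- t) * (t ^ k / INR (fact k))).
Proof. apply is_derive_unique. apply Q_derive. Qed.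

Lemma Q_bounds k u : 0 <= u -> 0 <= Q (S k) u <= 1.
Proof.
intro Hu. unfold Q. split.
- apply Rmult_le_pos. left; apply exp_pos. apply Sp_nonneg; auto.
- rewrite Sp_sum. pose proof (exp_ge_taylor u k Hu).
  replace 1 with (exp (-u) * exp u). apply Rmult_le_compat_l. left; apply exp_pos. auto.
  rewrite <- exp_plus. replace (-u+u) with 0 by ring. apply exp_0.
Qed.

Definition LimI (F : R -> R) (l : R) := forall eps, 0 < eps -> exists M, forall b, M <= b -> Rabs (F b - l) < eps.

Lemma LimI_plus F G l1 l2 : LimI F l1 -> LimI G l2 -> LimI (fun b => F b + G b) (l1 + l2).
Proof.
intros HF HG eps He. destruct (HF (eps/2)) as [M1 H1]; [lra|]. destruct (HG (eps/2)) as [M2 H2]; [lra|].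
exists (Rmax M1 M2). intros b Hb. pose proof (H1 b (Rle_trans _ _ _ (Rmax_l _ _) Hb)).
pose proof (H2 b (Rle_trans _ _ _ (Rmax_r _ _) Hb)).
replace (F b + G b - (l1 + l2)) with ((F b - l1) + (G b - l2)) by ring.
eapply Rle_lt_trans. apply Rabs_triang. lra.
Qed.

Lemma LimI_scal F l c : LimI F l -> LimI (fun b => c * F b) (c * l).
Proof.
intros HF eps He. destruct (HF (eps / (Rabs c + 1))) as [M H]. apply Rdiv_lt_0_compat; auto. pose proof (Rabs_pos c); lra.
exists M. intros b Hb. specialize (H b Hb).
replace (c * F b - c * l) with (c * (F b - l)) by ring. rewrite Rabs_mult.
pose proof (Rabs_pos c). pose proof (Rabs_pos (F b - l)).
apply (Rmult_lt_compat_l (Rabs c + 1)) in H; [|lra].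
replace ((Rabs c + 1) * (eps / (Rabs c + 1))) with eps in H by (field; lra). nra.
Qed.

Lemma LimI_const c : LimI (fun _ => c) c.
Proof. intros eps He. exists 0. intros. replace (c - c) with 0 by ring. rewrite Rabs_R0; auto. Qed.

Lemma LimI_ext F G l M0 : (forall b, M0 <= b -> F b = G b) -> LimI F l -> LimI G l.
Proof.
intros E HF eps He. destruct (HF eps He) as [M H]. exists (Rmax M M0). intros b Hb.
rewrite <- E. apply H. eapply Rle_trans; [apply Rmax_l|eauto]. eapply Rle_trans; [apply Rmax_r|eauto].
Qed.

Lemma LimI_squeeze F C M0 : 0 < C -> (forall b, M0 <= b -> 0 < b /\ 0 <= F b <= C / b) -> LimI F 0.
Proof.
intros HC HB eps He. exists (Rmax M0 (C / eps + 1)). intros b Hb.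
assert (H1 : M0 <= b) by (eapply Rle_trans; [apply Rmax_l|eauto]).
assert (H2 : C / eps + 1 <= b) by (eapply Rle_trans; [apply Rmax_r|eauto]).
destruct (HB b H1) as [Hb0 [Hf1 Hf2]]. rewrite Rminus_0_r, Rabs_right by lra.
eapply Rle_lt_trans. apply Hf2. apply (Rmult_lt_reg_r b); auto.
unfold Rdiv. rewrite Rmult_assoc, Rinv_l, Rmult_1_r by lra.
assert (C / eps < b) by lra. apply (Rmult_lt_compat_l eps) in H; auto.
replace (eps * (C/eps)) with C in H by (field; lra). lra.
Qed.

Lemma term_lim k : LimI (fun b => exp (-b) * (b^k / INR (fact k))) 0.
Proof.
apply (LimI_squeeze _ (INR (fact (S k)) / INR (fact k)) 1).
apply Rdiv_lt_0_compat; apply INR_fact_pos.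
intros b Hb. split; [lra|]. pose proof (INR_fact_pos k). pose proof (INR_fact_pos (S k)).
pose proof (exp_pos (-b)). pose proof (pow_lt b k ltac:(lra)). split.
- apply Rmult_le_pos; [lra|]. apply Rdiv_le_0_compat; lra.
- assert (Ht : b^(S k) / INR (fact (S k)) <= exp b).
  { pose proof (exp_ge_taylor b (S k) ltac:(lra)). rewrite tech5 in H3.
    assert (0 <= sum_f_R0 (fun k0 : nat => b ^ k0 / INR (fact k0)) k).
    { apply cond_pos_sum. intro n. apply Rdiv_le_0_compat. apply pow_le; lra. apply INR_fact_pos. }
    lra. }
  assert (E : exp (-b) * exp b = 1). { rewrite <- exp_plus. replace (-b+b) with 0 by ring. apply exp_0. }
  simpl pow in Ht.
  apply (Rmult_le_reg_r (b * INR (fact k) * exp b)). apply Rmult_lt_0_compat. nra. apply exp_pos.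
  replace (exp (- b) * (b ^ k / INR (fact k)) * (b * INR (fact k) * exp b)) with (b * b^k * (exp (-b) * exp b)) by (field; lra).
  replace (INR (fact (S k)) / INR (fact k) / b * (b * INR (fact k) * exp b)) with (INR (fact (S k)) * exp b) by (field; lra).
  rewrite E. apply (Rmult_le_compat_l (INR (fact (S k)))) in Ht; [|lra].
  replace (INR (fact (S k)) * (b * b ^ k / INR (fact (S k)))) with (b * b^k) in Ht by (field; lra). lra.
Qed.

Lemma Q_lim k : LimI (Q (S k)) 0.
Proof.
induction k.
- eapply LimI_ext with (M0 := 0). 2: apply (term_lim 0). intros; unfold Q; simpl; ring.
- eapply LimI_ext with (M0 := 0). 2: { rewrite <- (Rplus_0_r 0). apply LimI_plus. apply IHk. apply (term_lim (S k)). }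
  intros; unfold Q. change (Sp (S (S k)) b) with (Sp (S k) b + b^(S k) / INR (fact (S k))). ring.
Qed.

Lemma is_derive_eq (f : R -> R) x l l' : is_derive f x l -> l = l' -> is_derive f x l'.
Proof. intros H E; subst; auto. Qed.

Lemma improper_from f a l : (forall b, a <= b -> ex_RInt f a b) -> LimI (fun b => RInt f a b) l -> improper_int_to f a l.
Proof.
intros Hi HL. split.
- intros b Hb. constructor. apply ex_RInt_Reals_0, Hi, Hb.
- intros eps He. destruct (HL eps He) as [M H]. exists M. intros b pr Hb.
  rewrite <- RInt_Reals. apply H; auto.
Qed.

Lemma improper_unique f a l1 l2 : improper_int_to f a l1 -> improper_int_to f a l2 -> l1 = l2.
Proof.
intros [Hi H1] [_ H2]. destruct (Req_dec l1 l2) as [|Hne]; auto. exfalso.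
set (eps := Rabs (l1 - l2) / 2).
assert (Hp : 0 < eps). { unfold eps. apply Rdiv_lt_0_compat; [|lra]. apply Rabs_pos_lt. lra. }
destruct (H1 eps Hp) as [M1 HM1]. destruct (H2 eps Hp) as [M2 HM2].
set (b := Rmax a (Rmax M1 M2)).
assert (a <= b) by apply Rmax_l. assert (M1 <= b) by (unfold b; eapply Rle_trans; [|apply Rmax_r]; apply Rmax_l).
assert (M2 <= b) by (unfold b; eapply Rle_trans; [|apply Rmax_r]; apply Rmax_r).
destruct (Hi b H) as [pr]. specialize (HM1 b pr H0). specialize (HM2 b pr H3).
assert (Rabs (l1 - l2) <= Rabs (RiemannInt pr - l2) + Rabs (RiemannInt pr - l1)).
{ replace (l1 - l2) with ((RiemannInt pr - l2) - (RiemannInt pr - l1)) by ring. eapply Rle_trans. apply Rabs_triang. rewrite Rabs_Ropp. lra. }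
unfold eps in *. lra.
Qed.

Lemma Iint_eq f a l : improper_int_to f a l -> Iint f a = l.
Proof.
intro H. unfold Iint. apply (improper_unique f a). 2: auto.
apply epsilon_spec. exists l; auto.
Qed.

Lemma antideriv (F f : R -> R) (a b : R) : (forall t, Rmin a b <= t <= Rmax a b -> is_derive F t (f t)) ->
  (forall t, Rmin a b <= t <= Rmax a b -> ex_derive f t) -> ex_RInt f a b /\ RInt f a b = F b - F a.
Proof.
intros HD HC. assert (H : is_RInt f a b (minus (F b) (F a))).
{ apply (is_RInt_derive F f); auto. intros; apply (@ex_derive_continuous R_AbsRing R_NormedModule f); auto. }
split. exists (minus (F b) (F a)); auto. rewrite (is_RInt_unique f a b _ H). reflexivity.
Qed.

Lemma inc_gamma_closed k u : inc_gamma (S k) u = INR (fact k) * Q (S k) u.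
Proof.
unfold inc_gamma. apply Iint_eq. simpl Nat.sub. rewrite Nat.sub_0_r.
assert (HA : forall b, ex_RInt (fun t => t ^ k * exp (- t)) u b /\
   RInt (fun t => t ^ k * exp (- t)) u b = (fun t => - (INR (fact k) * Q (S k) t)) b - (fun t => - (INR (fact k) * Q (S k) t)) u).
{ intro b. apply (antideriv (fun t => - (INR (fact k) * Q (S k) t))).
  - intros t _. pose proof (Q_derive k t). pose proof (INR_fact_pos k).
    auto_derive. apply Q_ex_derive.
    rewrite Derive_Q. field. lra.
  - intros; auto_derive; auto. }
apply improper_from. intros; apply HA.
apply LimI_ext with (F := fun b => INR (fact k) * Q (S k) u + (- INR (fact k)) * Q (S k) b) (M0 := 0).
intros; rewrite (proj2 (HA b)); ring.
pose proof (LimI_plus (fun _ => INR (fact k) * Q (S k) u) (fun b => - INR (fact k) * Q (S k) b) _ _ (LimI_const _) (LimI_scal (Q (S k)) 0 (- INR (fact k)) (Q_lim k))) as Hl.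
rewrite Rmult_0_r, Rplus_0_r in Hl. exact Hl.
Qed.

Lemma Sp_0 k : Sp (S k) 0 = 1.
Proof. induction k. simpl; field. change (Sp (S (S k)) 0) with (Sp (S k) 0 + 0^(S k) / INR (fact (S k))). rewrite IHk. pose proof (INR_fact_pos (S k)). rewrite pow_i by lia. field. lra. Qed.

Lemma Gamma_val k : Gamma (S k) = INR (fact k).
Proof. unfold Gamma. rewrite inc_gamma_closed. unfold Q. rewrite Sp_0, Ropp_0, exp_0. ring. Qed.

Lemma ln2_pos : 0 < ln 2.
Proof. rewrite <- ln_1. apply ln_increasing; lra. Qed.

Lemma gamma_r_pos r : 0 < r -> 0 < gamma_r r.
Proof.
intro. unfold gamma_r, Rpower. pose proof ln2_pos.
assert (exp 0 < exp (2 * r * ln 2)) by (apply exp_increasing; nra). rewrite exp_0 in *. lra.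
Qed.

Lemma event Ps Pr Cx r x y : 0 < Ps -> 0 < Pr -> 0 < r -> 0 <= Cx -> Cx < 1 -> 0 <= x -> 0 <= y ->
  (R_sr Ps Pr Cx y x < r <-> y < (Pr * x + 1) * Psi r (Pr * x * Cx / (Pr * x + 1)) / Ps).
Proof.
intros HPs HPr Hr HC0 HC1 Hx Hy.
set (a := Pr * x + 1). set (X := Pr * x * Cx).
assert (Ha : 0 < a) by (unfold a; nra).
assert (HX0 : 0 <= X) by (unfold X; apply Rmult_le_pos; [apply Rmult_le_pos|]; lra).
assert (HXa : X < a). { unfold X, a. assert (0 <= Pr * x) by (apply Rmult_le_pos; lra). nra. }
pose proof (gamma_r_pos r Hr) as Hg. set (g := gamma_r r) in *.
set (s := 1 + g * (1 - (X / a) ^ 2)).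
assert (Hc : X / a < 1). { apply (Rmult_lt_reg_r a); auto. unfold Rdiv; rewrite Rmult_assoc, Rinv_l; lra. }
assert (Hc0 : 0 <= X / a) by (apply Rdiv_le_0_compat; lra).
assert (Hs : 1 <= s). { unfold s. set (c := X / a) in *. assert (0 <= 1 - c^2) by nra. assert (0 <= g * (1 - c^2)) by (apply Rmult_le_pos; lra). lra. }
pose proof (sqrt_sqrt s ltac:(lra)) as Hq. set (q := sqrt s) in *.
assert (Hq0 : 0 <= q) by apply sqrt_pos.
assert (Has : a^2 * s = a^2 + g * (a^2 - X^2)). { unfold s. field. lra. }
assert (HP : Psi r (X / a) = q - 1) by reflexivity.
unfold R_sr, log2. fold a X. rewrite HP.
replace (Ps * y + Pr * x + 1) with (Ps * y + a) by (unfold a; ring).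
set (N := (Ps * y + a) ^ 2 - X ^ 2). set (D := a ^ 2 - X ^ 2).
assert (HD : 0 < D) by (unfold D; nra).
assert (HPy : 0 <= Ps * y) by (apply Rmult_le_pos; lra).
assert (HN : 0 < N) by (unfold N; nra).
assert (HND : 0 < N / D) by (apply Rdiv_lt_0_compat; auto).
pose proof ln2_pos.
assert (E1 : / 2 * (ln (N / D) / ln 2) < r <-> ln (N / D) < 2 * r * ln 2).
{ split; intro H1.
  - apply (Rmult_lt_compat_l (2 * ln 2)) in H1; [|lra]. replace (2 * ln 2 * (/ 2 * (ln (N / D) / ln 2))) with (ln (N/D)) in H1 by (field; lra). lra.
  - apply (Rmult_lt_reg_l (2 * ln 2)); [lra|]. replace (2 * ln 2 * (/ 2 * (ln (N / D) / ln 2))) with (ln (N/D)) by (field; lra). lra. }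
assert (E2 : ln (N / D) < 2 * r * ln 2 <-> N / D < 1 + g).
{ unfold g, gamma_r, Rpower. replace (Rpower 2 (2*r)) with (exp (2 * r * ln 2)) by reflexivity.
  replace (1 + (exp (2 * r * ln 2) - 1)) with (exp (2 * r * ln 2)) by ring.
  split; intro H1.
  - rewrite <- (exp_ln (N/D)) by auto. apply exp_increasing; auto.
  - apply exp_lt_inv. rewrite exp_ln; auto. }
assert (E3 : N / D < 1 + g <-> N < (1 + g) * D).
{ split; intro H1.
  - apply (Rmult_lt_compat_r D) in H1; auto. unfold Rdiv in H1. rewrite Rmult_assoc, Rinv_l in H1; lra.
  - apply (Rmult_lt_reg_r D); auto. unfold Rdiv. rewrite Rmult_assoc, Rinv_l; lra. }
assert (E4 : N < (1 + g) * D <-> (Ps * y + a)^2 < (a * q)^2).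
{ replace ((a*q)^2) with (a^2 * (q * q)) by ring. rewrite Hq, Has. unfold N, D. split; intro; nra. }
assert (E5 : (Ps * y + a)^2 < (a * q)^2 <-> y < a * (q - 1) / Ps).
{ assert (0 < Ps * y + a) by nra.
  split; intro H1.
  - apply (Rmult_lt_reg_r Ps); auto. unfold Rdiv. rewrite Rmult_assoc, Rinv_l by lra.
    assert (Ps * y + a < a * q).
    { assert (0 <= a * q) by (apply Rmult_le_pos; lra). destruct (Rlt_le_dec (Ps * y + a) (a * q)) as [|Hle]; auto.
      assert ((a*q)^2 <= (Ps * y + a)^2) by (apply pow_incr; lra). lra. }
    lra.
  - apply (Rmult_lt_compat_r Ps) in H1; auto. unfold Rdiv in H1. rewrite Rmult_assoc, Rinv_l in H1 by lra.
    assert (Ps * y + a < a * q) by lra. assert (0 <= a * q) by (apply Rmult_le_pos; lra). nra. }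
rewrite E1, E2, E3, E4, E5. tauto.
Qed.

Definition gd k th y := y ^ k * exp (- y / th) / (INR (fact k) * th ^ (S k)).

Lemma Q0 k : Q (S k) 0 = 1.
Proof. unfold Q. rewrite Sp_0, Ropp_0, exp_0. ring. Qed.

Lemma gd_int k th a b : 0 < th -> ex_RInt (gd k th) a b /\ RInt (gd k th) a b = Q (S k) (a / th) - Q (S k) (b / th).
Proof.
intro Hth. pose proof (INR_fact_pos k).
assert (HA := antideriv (fun y => - Q (S k) (y / th)) (gd k th) a b).
replace (Q (S k) (a / th) - Q (S k) (b / th)) with (- Q (S k) (b / th) - - Q (S k) (a / th)) by ring.
apply HA.
- intros t _. auto_derive. apply Q_ex_derive. rewrite Derive_Q. unfold gd.
  unfold Rdiv. rewrite Rpow_mult_distr, pow_inv. simpl pow.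
  replace (- t * / th) with (- (t * / th)) by ring. field.
  split; [apply pow_nonzero; lra|]. split; lra.
- intros; unfold gd; auto_derive; auto.
Qed.

Lemma gamma_pdf_eq k th y : 0 <= y -> gamma_pdf (S k) th y = gd k th y.
Proof.
intro Hy. unfold gamma_pdf, gd. destruct (Rle_dec 0 y); [|lra]. rewrite Gamma_val.
simpl Nat.sub. rewrite Nat.sub_0_r. reflexivity.
Qed.

Lemma Psi_nonneg r c : 0 < r -> 0 <= c < 1 -> 0 <= Psi r c.
Proof.
intros Hr Hc. unfold Psi. pose proof (gamma_r_pos r Hr).
assert (1 <= 1 + gamma_r r * (1 - c^2)). { assert (0 <= 1 - c^2) by nra. assert (0 <= gamma_r r * (1 - c^2)) by (apply Rmult_le_pos; lra). lra. }
pose proof (sqrt_le_1_alt _ _ H0). rewrite sqrt_1 in H1. lra.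
Qed.

Definition Tt Ps Pr Cx r x := (Pr * x + 1) * Psi r (Pr * x * Cx / (Pr * x + 1)) / Ps.

Lemma c_bounds Pr Cx x : 0 < Pr -> 0 <= Cx -> Cx < 1 -> 0 <= x -> 0 <= Pr * x * Cx / (Pr * x + 1) < 1.
Proof.
intros. assert (0 < Pr * x + 1) by nra.
assert (0 <= Pr * x) by (apply Rmult_le_pos; lra). split. apply Rdiv_le_0_compat; [nra|lra].
apply (Rmult_lt_reg_r (Pr * x + 1)); auto. unfold Rdiv; rewrite Rmult_assoc, Rinv_l by lra. nra.
Qed.

Lemma Tt_nonneg Ps Pr Cx r x : 0 < Ps -> 0 < Pr -> 0 < r -> 0 <= Cx -> Cx < 1 -> 0 <= x -> 0 <= Tt Ps Pr Cx r x.
Proof.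
intros. unfold Tt. assert (0 < Pr * x + 1) by nra.
assert (0 <= Pr * x * Cx / (Pr * x + 1) < 1).
{ assert (0 <= Pr * x) by (apply Rmult_le_pos; lra). split. apply Rdiv_le_0_compat; [nra|lra].
  apply (Rmult_lt_reg_r (Pr * x + 1)); auto. unfold Rdiv; rewrite Rmult_assoc, Rinv_l by lra. nra. }
pose proof (Psi_nonneg r _ H1 H6). apply Rdiv_le_0_compat; [|lra]. apply Rmult_le_pos; lra.
Qed.

Lemma inner Ps Pr Cx r k th x : 0 < Ps -> 0 < Pr -> 0 < r -> 0 <= Cx -> Cx < 1 -> 0 < th -> 0 <= x ->
  Iint (fun y => gamma_pdf (S k) th y * (if Rlt_dec (R_sr Ps Pr Cx y x) r then 1 else 0)) 0
  = 1 - Q (S k) (Tt Ps Pr Cx r x / th).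
Proof.
intros HPs HPr Hr HC0 HC1 Hth Hx.
set (f := fun y => gamma_pdf (S k) th y * (if Rlt_dec (R_sr Ps Pr Cx y x) r then 1 else 0)).
pose proof (Tt_nonneg Ps Pr Cx r x HPs HPr Hr HC0 HC1 Hx) as HT.
set (T := Tt Ps Pr Cx r x) in *.
assert (Flo : forall y, 0 <= y < T -> f y = gd k th y).
{ intros y Hy. unfold f. rewrite gamma_pdf_eq by lra. destruct (Rlt_dec _ _) as [|Hn]. ring.
  exfalso. apply Hn. apply event; auto; try lra. exact (proj2 Hy). }
assert (Fhi : forall y, T <= y -> f y = 0).
{ intros y Hy. unfold f. destruct (Rlt_dec _ _) as [Hl|Hn]. 2: ring.
  apply event in Hl; auto; try lra. change (y < T) in Hl. lra. }
assert (E1 : ex_RInt f 0 T /\ RInt f 0 T = 1 - Q (S k) (T / th)).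
{ destruct (gd_int k th 0 T Hth) as [He Hr'].
  assert (Hx' : forall y, Rmin 0 T < y < Rmax 0 T -> gd k th y = f y).
  { rewrite Rmin_left, Rmax_right by lra. intros y Hy. rewrite Flo; auto; lra. }
  split. apply (ex_RInt_ext _ _ _ _ Hx' He).
  rewrite <- (RInt_ext _ _ _ _ Hx'). rewrite Hr'. replace (0 / th) with 0 by (field; lra). rewrite Q0. reflexivity. }
assert (E2 : forall b, T <= b -> ex_RInt f T b /\ RInt f T b = 0).
{ intros b Hb.
  assert (Hx' : forall y, Rmin T b < y < Rmax T b -> (fun _ => 0) y = f y).
  { rewrite Rmin_left, Rmax_right by lra. intros y Hy. rewrite Fhi; auto; lra. }
  split. apply (ex_RInt_ext _ _ _ _ Hx'). apply ex_RInt_const.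
  rewrite <- (RInt_ext _ _ _ _ Hx'). rewrite RInt_const. unfold scal; simpl. unfold mult; simpl. ring. }
apply Iint_eq. apply improper_from.
- intros b Hb. destruct (Rle_dec b T).
  + apply ex_RInt_Chasles_1 with T. lra. apply E1.
  + apply ex_RInt_Chasles with T. apply E1. apply E2; lra.
- apply LimI_ext with (F := fun _ => 1 - Q (S k) (T / th)) (M0 := T). 2: apply LimI_const.
  intros b Hb. rewrite <- (RInt_Chasles f 0 T b). 2: apply E1. 2: apply E2; auto.
  rewrite (proj2 E1), (proj2 (E2 b Hb)). unfold plus; simpl. ring.
Qed.

Lemma mono_lim F B : (forall b1 b2, 0 <= b1 <= b2 -> F b1 <= F b2) -> (forall b, 0 <= b -> F b <= B) -> exists L, LimI F L.
Proof.
intros Hm Hb. set (E := fun v => exists b, 0 <= b /\ v = F b).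
assert (HB : bound E). { exists B. intros v [b [H0 ->]]. auto. }
assert (HE : exists v, E v). { exists (F 0). exists 0. split; [lra|auto]. }
destruct (completeness E HB HE) as [L [Hub Hlub]]. exists L.
intros eps He.
assert (Hex : exists b0, 0 <= b0 /\ L - eps < F b0).
{ apply NNPP. intro Hn. assert (L <= L - eps). { apply Hlub. intros v [b [H0 ->]].
  destruct (Rle_dec (F b) (L - eps)) as [|Hgt]; auto. exfalso. apply Hn. exists b. split; auto. lra. } lra. }
destruct Hex as [b0 [H0 H1]]. exists b0. intros b Hbb.
assert (F b0 <= F b) by (apply Hm; lra). assert (F b <= L) by (apply Hub; exists b; split; [lra|auto]).
rewrite Rabs_left1 by lra. lra.
Qed.

Lemma LimI_scale F l th : 0 < th -> LimI F l -> LimI (fun b => F (b / th)) l.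
Proof.
intros Hth HF eps He. destruct (HF eps He) as [M H]. exists (M * th). intros b Hb. apply H.
apply (Rmult_le_reg_r th); auto. unfold Rdiv. rewrite Rmult_assoc, Rinv_l; lra.
Qed.

Lemma w_ex_derive Ps Pr Cx r k1 k2 th1 th2 x : 0 < Ps -> 0 < Pr -> 0 < r -> 0 <= Cx -> Cx < 1 -> 0 < th1 -> 0 < th2 -> 0 <= x ->
  ex_derive (fun x => gd k2 th2 x * Q (S k1) (Tt Ps Pr Cx r x / th1)) x.
Proof.
intros. pose proof (c_bounds Pr Cx x H0 H2 H3 H6) as Hc. set (c := Pr * x * Cx / (Pr * x + 1)) in *.
pose proof (gamma_r_pos r H1).
unfold gd, Tt, Psi. auto_derive. repeat split.
- apply Q_ex_derive.
- nra.
- change (Pr * x * Cx * / (Pr * x + 1)) with c. assert (0 <= 1 - c * c) by nra. assert (0 <= gamma_r r * (1 - c*c)) by (apply Rmult_le_pos; lra). lra.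
Qed.


Lemma RInt_minusR (f g : R -> R) a b : ex_RInt f a b -> ex_RInt g a b -> ex_RInt (fun x => f x - g x) a b /\ RInt (fun x => f x - g x) a b = RInt f a b - RInt g a b.
Proof. intros Hf Hg. split.
apply (ex_RInt_minus (V := R_NormedModule)); auto.
apply (RInt_minus (V := R_CompleteNormedModule)); auto.
Qed.
Lemma RInt_scalR (f : R -> R) c a b : ex_RInt f a b -> ex_RInt (fun x => c * f x) a b /\ RInt (fun x => c * f x) a b = c * RInt f a b.
Proof. intros Hf. split.
apply (ex_RInt_scal (V := R_NormedModule)); auto.
apply (RInt_scal (V := R_CompleteNormedModule)); auto.
Qed.
Theorem lemma2 (Ps Pr r Cx : R) (msr mrr : nat) (pisr pirr : R)
  (hPs : 0 < Ps) (hPr : 0 < Pr) (hr : 0 < r) (hC0 : 0 <= Cx) (hC1 : Cx < 1)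
  (hmsr : (1 <= msr)%nat) (hmrr : (1 <= mrr)%nat)
  (hpisr : 0 < pisr) (hpirr : 0 < pirr) :
  let thsr := pisr / INR msr in
  let thrr := pirr / INR mrr in
  P_sr Ps Pr Cx r msr mrr thsr thrr =
  1 - / (Gamma mrr * Gamma msr * thrr ^ mrr) *
      Iint (fun x => x ^ (mrr - 1) *
              inc_gamma msr ((Pr * x + 1) / (Ps * thsr) *
                             Psi r (Pr * x * Cx / (Pr * x + 1))) *
              exp (- x / thrr)) 0.
Proof.
intros thsr thrr.
assert (Hth1 : 0 < thsr) by (unfold thsr; apply Rdiv_lt_0_compat; [lra| apply lt_0_INR; lia]).
assert (Hth2 : 0 < thrr) by (unfold thrr; apply Rdiv_lt_0_compat; [lra| apply lt_0_INR; lia]).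
clearbody thsr thrr.
destruct msr as [|k1]; [lia|]. destruct mrr as [|k2]; [lia|].
set (w := fun x => gd k2 thrr x * Q (S k1) (Tt Ps Pr Cx r x / thsr)).
assert (Hw_int : forall b, 0 <= b -> ex_RInt w 0 b).
{ intros b Hb. apply (@ex_RInt_continuous R_CompleteNormedModule). intros z Hz. rewrite Rmin_left in Hz by lra.
  apply (@ex_derive_continuous R_AbsRing R_NormedModule w). apply w_ex_derive; auto; lra. }
assert (Hgd : forall b, ex_RInt (gd k2 thrr) 0 b /\ RInt (gd k2 thrr) 0 b = 1 - Q (S k2) (b / thrr)).
{ intro b. destruct (gd_int k2 thrr 0 b Hth2) as [H1 H2]. split; auto. rewrite H2.
  replace (0 / thrr) with 0 by (field; lra). rewrite Q0. reflexivity. }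
assert (Hgd0 : forall x, 0 <= x -> 0 <= gd k2 thrr x).
{ intros x Hx. unfold gd. apply Rdiv_le_0_compat. apply Rmult_le_pos. apply pow_le; auto. left; apply exp_pos.
  apply Rmult_lt_0_compat. apply INR_fact_pos. apply pow_lt; auto. }
assert (Hw_bd : forall x, 0 <= x -> 0 <= w x <= gd k2 thrr x).
{ intros x Hx. unfold w. pose proof (Hgd0 x Hx).
  assert (0 <= Tt Ps Pr Cx r x / thsr) by (apply Rdiv_le_0_compat; [apply Tt_nonneg|]; auto).
  destruct (Q_bounds k1 _ H0). split. apply Rmult_le_pos; auto. 
  replace (gd k2 thrr x) with (gd k2 thrr x * 1) at 2 by ring. apply Rmult_le_compat_l; auto. }
destruct (mono_lim (fun b => RInt w 0 b) 1) as [L HL].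
{ intros b1 b2 Hb. rewrite <- (RInt_Chasles w 0 b1 b2). 2: apply Hw_int; lra.
  2: apply (ex_RInt_Chasles_2 w 0); [lra| apply Hw_int; lra].
  assert (0 <= RInt w b1 b2). { apply RInt_ge_0. lra. apply (ex_RInt_Chasles_2 w 0); [lra| apply Hw_int; lra].
    intros; apply Hw_bd; lra. }
  unfold plus; simpl. lra. }
{ intros b Hb. apply Rle_trans with (RInt (gd k2 thrr) 0 b).
  apply RInt_le; auto. apply Hgd. intros; apply Hw_bd; lra.
  rewrite (proj2 (Hgd b)). assert (0 <= b / thrr) by (apply Rdiv_le_0_compat; lra).
  pose proof (Q_bounds k2 _ H). lra. }
assert (HQl : LimI (fun b => Q (S k2) (b / thrr)) 0) by (apply (LimI_scale (Q (S k2))); auto; apply Q_lim).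
assert (HLHS : P_sr Ps Pr Cx r (S k1) (S k2) thsr thrr = 1 - L).
{ unfold P_sr. apply Iint_eq.
  set (phi := fun x => gamma_pdf (S k2) thrr x * Iint (fun y => gamma_pdf (S k1) thsr y * (if Rlt_dec (R_sr Ps Pr Cx y x) r then 1 else 0)) 0).
  assert (Hphi : forall b, 0 <= b -> forall x, Rmin 0 b < x < Rmax 0 b -> gd k2 thrr x - w x = phi x).
  { intros b Hb x Hx. rewrite Rmin_left, Rmax_right in Hx by lra. unfold phi.
    rewrite gamma_pdf_eq by lra. rewrite inner by (auto; lra). unfold w. ring. }
  apply improper_from.
  - intros b Hb. apply (ex_RInt_ext _ _ _ _ (Hphi b Hb)). apply RInt_minusR. apply Hgd. apply Hw_int; auto.
  - apply LimI_ext with (F := fun b => (1 + -1 * Q (S k2) (b / thrr)) + (-1) * RInt w 0 b) (M0 := 0).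
    + intros b Hb. rewrite <- (RInt_ext _ _ _ _ (Hphi b Hb)). rewrite (proj2 (RInt_minusR _ _ _ _ (proj1 (Hgd b)) (Hw_int b Hb))).
      rewrite (proj2 (Hgd b)). ring.
    + pose proof (LimI_scal _ _ (-1) HQl) as H1. pose proof (LimI_plus _ _ _ _ (LimI_const 1) H1) as H2.
      pose proof (LimI_scal _ _ (-1) HL) as H3. pose proof (LimI_plus _ _ _ _ H2 H3) as H4.
      replace (1 - L) with ((1 + -1 * 0) + -1 * L) by ring. exact H4. }
set (C := INR (fact k1) * (INR (fact k2) * thrr ^ (S k2))).
assert (HRHS : Iint (fun x => x ^ (S k2 - 1) * inc_gamma (S k1) ((Pr * x + 1) / (Ps * thsr) * Psi r (Pr * x * Cx / (Pr * x + 1))) * exp (- x / thrr)) 0 = C * L).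
{ apply Iint_eq. simpl Nat.sub. rewrite Nat.sub_0_r.
  assert (Hh : forall x, C * w x = x ^ k2 * inc_gamma (S k1) ((Pr * x + 1) / (Ps * thsr) * Psi r (Pr * x * Cx / (Pr * x + 1))) * exp (- x / thrr)).
  { intro x. rewrite inc_gamma_closed. unfold w, gd, Tt, C.
    replace ((Pr * x + 1) * Psi r (Pr * x * Cx / (Pr * x + 1)) / Ps / thsr) with ((Pr * x + 1) / (Ps * thsr) * Psi r (Pr * x * Cx / (Pr * x + 1))) by (field; lra).
    pose proof (INR_fact_pos k2). field. split. apply pow_nonzero; lra. lra. }
  apply improper_from.
  - intros b Hb. apply (ex_RInt_ext (fun x => C * w x)). intros; apply Hh. apply RInt_scalR. apply Hw_int; auto.
  - apply LimI_ext with (F := fun b => C * RInt w 0 b) (M0 := 0).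
    + intros b Hb. rewrite <- (proj2 (RInt_scalR w C 0 b (Hw_int b Hb))). apply RInt_ext. intros; apply Hh.
    + apply (LimI_scal _ _ C HL). }
rewrite HLHS, HRHS. rewrite !Gamma_val. unfold C. pose proof (INR_fact_pos k1). pose proof (INR_fact_pos k2).
field. split. apply pow_nonzero; lra. lra.
Qed.
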